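(* Let $A_1,A_2\in\mathbb{R}^{2\times2}$ and suppose $A_1$ has two distinct eigenvalues. Then there exists $T\in GL(2,\mathbb{R})$ such that: (i) if $A_1$ has real eigenvalues and $\det[A_1,A_2]\ne0$, then $TA_1T^{-1}=\begin{pmatrix}\lambda_1&0\\0&\lambda_2\end{pmatrix}$ and $TA_2T^{-1}=\begin{pmatrix}s_{21}&t_2\\t_2&s_{22}\end{pmatrix}$ or $\begin{pmatrix}s_{21}&-t_2\\t_2&s_{22}\end{pmatrix}$ for some $\lambda_j,s_{2j},t_2\in\mathbb{R}$, $j=1,2$; (ii) if $A_1$ has non-real eigenvalues, then $TA_1T^{-1}=\begin{pmatrix}s_1&-t_1\\t_1&s_1\end{pmatrix}$ and $TA_2T^{-1}=\begin{pmatrix}s_{21}&-t_2\\t_2&s_{22}\end{pmatrix}$ for some $s_1,t_1,s_{21},s_{22},t_2\in\mathbb{R}$.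
   Context: $[A,B]=AB-BA$. *)

(* Defs.v *)
(* Real matrices over an arbitrary real closed field R
   (covers R = the reals); eigenvalues are taken in R[i] = complex R. *)
From HB Require Import structures.
From mathcomp Require Import all_boot all_order all_algebra.
From mathcomp Require Import complex.
Set Implicit Arguments. Unset Strict Implicit. Unset Printing Implicit Defensive.
Import Order.TTheory GRing.Theory Num.Theory.
Local Open Scope ring_scope.

Definition mx2 {R : Type} (a b c d : R) : 'M[R]_2 :=
  \matrix_(i < 2, j < 2)
     if i == 0 :> nat then (if j == 0 :> nat then a else b)
     else (if j == 0 :> nat then c else d).

Definition commmx {R : pzRingType} {n : nat} (A B : 'M[R]_n) : 'M[R]_n :=
  A *m B - B *m A.

Definition cplx_mx {R : rcfType} {n : nat} (A : 'M[R]_n) : 'M[R[i]]_n :=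
  map_mx (fun x : R => Complex x 0) A.

Definition ceigenvalue {R : rcfType} {n : nat} (A : 'M[R]_n.+1) (l : R[i]) : bool :=
  eigenvalue (cplx_mx A) l.

(* Main.v *)
Require Import Defs.
From HB Require Import structures.
From mathcomp Require Import all_boot all_order all_algebra.
From mathcomp Require Import complex.
From mathcomp Require Import ring lra.
Import Order.TTheory GRing.Theory Num.Theory.
Set Implicit Arguments. Unset Strict Implicit.
Local Open Scope ring_scope.

Lemma ord2 (i : 'I_2) : i = 0 \/ i = 1.
Proof. by case: i => [[|[|//]]] H; [left|right]; apply/val_inj. Qed.

Section M.
Variable R : comUnitRingType.

Lemma mx2E (M : 'M[R]_2) : M = mx2 (M 0 0) (M 0 1) (M 1 0) (M 1 1).
Proof. by apply/matrixP=> i j; rewrite mxE; case: (ord2 i)=> ->; case: (ord2 j)=> ->. Qed.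

Lemma mx2_00 (a b c d : R) : mx2 a b c d 0 0 = a. Proof. by rewrite mxE. Qed.
Lemma mx2_01 (a b c d : R) : mx2 a b c d 0 1 = b. Proof. by rewrite mxE. Qed.
Lemma mx2_10 (a b c d : R) : mx2 a b c d 1 0 = c. Proof. by rewrite mxE. Qed.
Lemma mx2_11 (a b c d : R) : mx2 a b c d 1 1 = d. Proof. by rewrite mxE. Qed.

Lemma mul2 (a b c d e f g h : R) : mx2 a b c d *m mx2 e f g h =
  mx2 (a * e + b * g) (a * f + b * h) (c * e + d * g) (c * f + d * h).
Proof.
apply/matrixP=> i j; rewrite !mxE !big_ord_recl big_ord0 addr0 !mxE /=.
by case: (ord2 i)=> ->; case: (ord2 j)=> ->.
Qed.

Lemma det2 (M : 'M[R]_2) : \det M = M 0 0 * M 1 1 - M 0 1 * M 1 0.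
Proof.
rewrite (expand_det_row _ ord0) !big_ord_recl big_ord0 /cofactor !det_mx11 !mxE /=.
rewrite addr0 expr0 mul1r expr1.
rewrite mulN1r mulrN; congr (_ * M _ _ - M _ _ * M _ _); exact: val_inj.
Qed.

Lemma det_mx2 (a b c d : R) : \det (mx2 a b c d) = a * d - b * c.
Proof. by rewrite det2 mx2_00 mx2_01 mx2_10 mx2_11. Qed.

Lemma one2 : (1%:M : 'M[R]_2) = mx2 1 0 0 1.
Proof. by apply/matrixP=> i j; rewrite !mxE; case: (ord2 i)=> ->; case: (ord2 j)=> ->. Qed.

Lemma invmx_eq n (A B : 'M[R]_n.+1) : A *m B = 1%:M -> invmx A = B.
Proof.
move=> AB; have [uA _] := mulmx1_unit AB.
by rewrite -[invmx A]mulmx1 -AB mulmxA mulVmx // mul1mx.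
Qed.

Definition conj (T X : 'M[R]_2) := T *m X *m invmx T.

Lemma conjM (T U X : 'M[R]_2) : T \in unitmx -> U \in unitmx ->
  conj (U *m T) X = conj U (conj T X).
Proof.
move=> uT uU; rewrite /conj; have -> : invmx (U *m T) = invmx T *m invmx U.
  by apply: invmx_eq; rewrite mulmxA -(mulmxA U) mulmxV // mulmx1 mulmxV.
by rewrite !mulmxA.
Qed.

Lemma conj_eq (T X Y : 'M[R]_2) : T \in unitmx -> T *m X = Y *m T -> conj T X = Y.
Proof. by move=> uT E; rewrite /conj E mulmxK. Qed.

Lemma conj_comm (T X Y : 'M[R]_2) : T \in unitmx ->
  conj T (commmx X Y) = commmx (conj T X) (conj T Y).
Proof.
move=> uT; rewrite /conj /commmx mulmxBr mulmxBl.
by rewrite !mulmxA !mulmxKV // !mulmxA.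
Qed.

Lemma det_conj (T X : 'M[R]_2) : T \in unitmx -> \det (conj T X) = \det X.
Proof.
move=> uT; rewrite /conj !det_mulmx det_inv mulrC mulrA mulVr ?mul1r //.

Qed.
End M.

Lemma inv2 (F : fieldType) (a b c d : F) : a * d - b * c != 0 ->
  invmx (mx2 a b c d) = let D := a * d - b * c in mx2 (d / D) (- b / D) (- c / D) (a / D).
Proof.
move=> nz; apply: invmx_eq; rewrite mul2 one2.
by congr mx2; field.
Qed.

Lemma eig_det (F : fieldType) n (A : 'M[F]_n) a : eigenvalue A a = (\det (a%:M - A) == 0).
Proof.
apply/eigenvalueP/det0P=> [[v Av_av v_nz] | [v v_nz Av_av]]; exists v => //.
  by rewrite mulmxBr Av_av mul_mx_scalar subrr.
by apply/eqP; rewrite -mul_mx_scalar eq_sym -subr_eq0 -mulmxBr Av_av.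
Qed.

Lemma ceig2 (R : rcfType) (A : 'M[R]_2) (x y : R) :
  ceigenvalue A (Complex x y) =
  ((x^+2 - y^+2 - (A 0 0 + A 1 1) * x + (A 0 0 * A 1 1 - A 0 1 * A 1 0) == 0)
   && ((2 * x - (A 0 0 + A 1 1)) * y == 0)).
Proof.
rewrite /ceigenvalue eig_det det2 !mxE /=.
simpc.
rewrite eq_complex /=; congr (_ && _); congr (_ == _); ring.
Qed.


Lemma sub2 (R : comUnitRingType) (a b c d a' b' c' d' : R) :
  mx2 a b c d - mx2 a' b' c' d' = mx2 (a - a') (b - b') (c - c') (d - d').
Proof. by apply/matrixP=> i j; rewrite !mxE; case: (ord2 i)=> ->; case: (ord2 j)=> ->. Qed.

Unset Implicit Arguments.
Set Strict Implicit.
Theorem lemma2p10 (R : rcfType) (A1 A2 : 'M[R]_2) :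
  (exists l1 l2 : R[i], [/\ l1 != l2, ceigenvalue A1 l1 & ceigenvalue A1 l2]) ->
  exists T : 'M[R]_2, T \in unitmx /\
    ((forall l : R[i], ceigenvalue A1 l -> complex.Im l = 0) ->
       \det (commmx A1 A2) != 0 ->
       exists l1 l2 s21 s22 t2 : R,
         T *m A1 *m invmx T = mx2 l1 0 0 l2 /\
         (T *m A2 *m invmx T = mx2 s21 t2 t2 s22 \/
          T *m A2 *m invmx T = mx2 s21 (- t2) t2 s22)) /\
    ((exists l : R[i], ceigenvalue A1 l /\ complex.Im l != 0) ->
       exists s1 t1 s21 s22 t2 : R,
         T *m A1 *m invmx T = mx2 s1 (- t1) t1 s1 /\
         T *m A2 *m invmx T = mx2 s21 (- t2) t2 s22).
Proof.
move=> [l1 [l2 [ne e1 e2]]].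
have HA : A1 = mx2 (A1 0 0) (A1 0 1) (A1 1 0) (A1 1 1) by exact: mx2E.
move: (A1 0 0) (A1 0 1) (A1 1 0) (A1 1 1) HA => a b c d HA.
have ceigE : forall x y, ceigenvalue A1 (Complex x y) =
   ((x^+2 - y^+2 - (a+d)*x + (a*d - b*c) == 0) && ((2*x - (a+d))*y == 0)).
  by move=> x y; rewrite ceig2 HA !mx2_00 !mx2_01 !mx2_10 !mx2_11.
pose disc := (a - d)^+2 + 4 * b * c.
have [dlt|dge] := ltrP disc 0.
  pose s := (a + d) / 2; pose t : R := Num.sqrt (- disc) / 2; pose e := (a - d) / 2.
  have t2 : t * t = - disc / 4.
    rewrite /t mulrA (mulrC _ (Num.sqrt _)) mulrA -expr2 sqr_sqrtr; last by lra.
    by field.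
  have tpos : 0 < t by rewrite /t divr_gt0 // sqrtr_gt0; lra.
  have c0 : c != 0.
    apply/eqP=> c0; move: dlt; rewrite /disc c0 mulr0 addr0; by rewrite ltNge sqr_ge0.
  pose T0 := mx2 c (-e) 0 t.
  have uT0 : T0 \in unitmx.
    rewrite unitmxE det_mx2 unitfE mulr0 subr0; apply: mulf_neq0 => //; exact: lt0r_neq0.
  have CA1 : conj T0 A1 = mx2 s (-t) t s.
    apply: conj_eq => //; rewrite HA !mul2; congr mx2.
    all: try (rewrite /s /e; field). all: try done. by rewrite !mulNr t2 /s /e /disc; field.
  have ev : ceigenvalue A1 (Complex s t).
    rewrite ceigE; apply/andP; split; apply/eqP.
      by rewrite [t ^+ 2]expr2 t2 /s /disc; field.
    by rewrite /s; field.
  have nonreal : ~ (forall l : R[i], ceigenvalue A1 l -> complex.Im l = 0).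
    by move=> H; move: (H _ ev) => /= t0; move: tpos; rewrite t0 ltxx.
  pose B := conj T0 A2.
  have HB := mx2E B.
  move: (B 0 0) (B 0 1) (B 1 0) (B 1 1) HB => x y z w HB.
  pose r := (x - w) / 2; pose u := (y + z) / 2.
  have [u0|un0] := eqVneq u 0.
    exists T0; split => //; split; first by move=> H; exfalso; exact: nonreal H.
    move=> _; exists s, t, x, w, z; split; first exact: CA1.
    change (B = mx2 x (- z) z w); rewrite HB; congr mx2.
    move: u0; rewrite /u; lra.
  pose rho : R := Num.sqrt (r ^+ 2 + u ^+ 2).
  have rho2 : rho * rho = r ^+ 2 + u ^+ 2.
    rewrite -expr2 sqr_sqrtr //; apply: addr_ge0; exact: sqr_ge0.
  pose al := rho + r; pose be := - u.
  pose C := mx2 al (- be) be al.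
  have u2 : 0 < u ^+ 2 by rewrite exprn_even_gt0 //= un0.
  have nD : al * al - (- be) * be != 0.
    apply: lt0r_neq0; rewrite /be mulNr opprK -expr2; nra.
  have uC : C \in unitmx by rewrite unitmxE det_mx2 unitfE.
  exists (C *m T0); split; first by rewrite unitmx_mul uC uT0.
  split; first by move=> H; exfalso; exact: nonreal H.
  move=> _.
  have E1 : conj (C *m T0) A1 = mx2 s (- t) t s.
    rewrite conjM // CA1 /conj inv2 // !mul2; congr mx2; field; exact: nD.
  have E2 : conj (C *m T0) A2 = conj C B by rewrite conjM.
  have key : conj C B 0 1 + conj C B 1 0 = 0.
    rewrite /conj HB inv2 // !mul2 mx2_01 mx2_10.
    transitivity (2 * u * (rho * rho - (r ^+ 2 + u ^+ 2)) / (al * al - (- be) * be)).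
      rewrite /al /be /r /u; field.
      apply: contra_neq nD => h; rewrite /al /be /r /u; lra.
    by rewrite -rho2 subrr mulr0 mul0r.
  exists s, t, (conj C B 0 0), (conj C B 1 1), (conj C B 1 0); split; first exact: E1.
  change (conj (C *m T0) A2 = mx2 (conj C B 0 0) (- conj C B 1 0) (conj C B 1 0) (conj C B 1 1)).
  rewrite E2 [LHS]mx2E; congr mx2; lra.
have real_of : forall x y, ceigenvalue A1 (Complex x y) -> y = 0.
  move=> x y; rewrite ceigE => /andP[/eqP h1 h2].
  move: h2; rewrite mulf_eq0 => /orP[/eqP hx|/eqP //].
  have hx' : x = (a + d) / 2 by lra.
  have hy : y ^+ 2 = - disc / 4 - (x ^+ 2 - y ^+ 2 - (a + d) * x + (a * d - b * c)).
    by rewrite hx' /disc; field.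
  rewrite h1 subr0 in hy.
  have hle : y ^+ 2 <= 0 by rewrite hy; lra.
  by apply/eqP; rewrite -sqrf_eq0 eq_le hle sqr_ge0.
have dpos : 0 < disc.
  rewrite lt_neqAle dge andbT; apply/eqP => d0.
  have fixl : forall l, ceigenvalue A1 l -> l = Complex ((a + d) / 2) 0.
    case=> x y e; have y0 := real_of _ _ e.
    move: e; rewrite ceigE y0 => /andP[/eqP h1 _].
    have : (2 * x - (a + d)) ^+ 2 = 0.
      transitivity (4 * (x ^+ 2 - 0 ^+ 2 - (a + d) * x + (a * d - b * c)) + disc).
        by rewrite /disc; ring.
      by rewrite h1 -d0; ring.
    move/eqP; rewrite sqrf_eq0 => /eqP hx.
    by congr Complex; lra.
  by move: ne; rewrite (fixl _ e1) (fixl _ e2) eqxx.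
have [dc0|dcn] := eqVneq (\det (commmx A1 A2)) 0.
  exists 1%:M; split; first exact: unitmx1.
  split.
    by [].
  by move=> [[x y] [el /= hl]]; move: hl; rewrite (real_of _ _ el) eqxx.
pose r0 : R := Num.sqrt disc.
have r0pos : 0 < r0 by rewrite sqrtr_gt0.
have r02 : r0 * r0 = disc by rewrite -expr2 sqr_sqrtr // ltW.
have [r' [r'2 r'n0 r'a]] : exists r' : R, [/\ r' * r' = disc, r' != 0 & r' + a - d != 0].
  have [h|h] := eqVneq (r0 + a - d) 0.
    exists (- r0); split; first by rewrite mulrNN.
      by rewrite oppr_eq0 lt0r_neq0.
    by apply/eqP => h'; move: r0pos; lra.
  by exists r0; split => //; rewrite lt0r_neq0.
pose l1' : R := (a + d + r') / 2; pose l2' : R := (a + d - r') / 2.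
pose T0 := mx2 (l1' - d) b c (l2' - a).
have detT0 : (l1' - d) * (l2' - a) - b * c = - r' * (r' + a - d) / 2 + (r' * r' - disc) / 4.
  by rewrite /l1' /l2' /disc; field.
rewrite r'2 subrr mul0r addr0 in detT0.
have nT : (l1' - d) * (l2' - a) - b * c != 0.
  rewrite detT0; apply: mulf_neq0; last by rewrite invr_eq0 pnatr_eq0.
  by apply: mulf_neq0 => //; rewrite oppr_eq0.
have uT0 : T0 \in unitmx by rewrite unitmxE det_mx2 unitfE.
pose D := mx2 l1' 0 0 l2'.
have CA1 : conj T0 A1 = D.
  apply: conj_eq => //; rewrite HA !mul2; congr mx2; try ring.
    transitivity (l1' * (l1' - d) + 0 * c + (disc - r' * r') / 4).
      by rewrite /l1' /disc; field.
    by rewrite r'2 subrr !mul0r !addr0.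
  transitivity (0 * b + l2' * (l2' - a) + (disc - r' * r') / 4).
    rewrite /l2' /disc. by field.
  by rewrite r'2 subrr !mul0r !addr0.
pose B := conj T0 A2.
have HB := mx2E B.
move: (B 0 0) (B 0 1) (B 1 0) (B 1 1) HB => x y z w HB.
have detE : \det (commmx A1 A2) = r' * r' * (y * z).
  rewrite -(det_conj _ uT0) conj_comm // CA1 -/B HB /commmx !mul2 sub2 det_mx2.
  by rewrite /l1' /l2'; field.
have yz : y * z != 0 by move: dcn; rewrite detE mulf_eq0 negb_or => /andP[].
have y0 : y != 0 by move: yz; rewrite mulf_eq0 negb_or => /andP[].
have z0 : z != 0 by move: yz; rewrite mulf_eq0 negb_or => /andP[].
pose p : R := Num.sqrt `|z|; pose q : R := Num.sqrt `|y|.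
have ppos : 0 < p by rewrite sqrtr_gt0 normr_gt0.
have qpos : 0 < q by rewrite sqrtr_gt0 normr_gt0.
have pp : p * p = `|z| by rewrite -expr2 sqr_sqrtr.
have qq : q * q = `|y| by rewrite -expr2 sqr_sqrtr.
have p0 : p != 0 by exact: lt0r_neq0.
have q0 : q != 0 by exact: lt0r_neq0.
pose P := mx2 p 0 0 q.
have nP : p * q - 0 * 0 != 0 by rewrite mul0r subr0 mulf_neq0.
have uP : P \in unitmx by rewrite unitmxE det_mx2 unitfE.
exists (P *m T0); split; first by rewrite unitmx_mul uP uT0.
split; last first.
  by move=> [[x' y'] [el /= hl]]; move: hl; rewrite (real_of _ _ el) eqxx.
move=> _ _.
have E1 : conj (P *m T0) A1 = mx2 l1' 0 0 l2'.
  rewrite conjM // CA1 /conj inv2 // !mul2; congr mx2; field; exact/andP.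
have E2 : conj (P *m T0) A2 = mx2 x (p * y / q) (q * z / p) w.
  rewrite conjM // -/B HB /conj inv2 // !mul2; congr mx2; field; exact/andP.
have sq : (`|z| * y - `|y| * z) * (`|z| * y + `|y| * z) = 0.
  transitivity (`|z| ^+ 2 * y ^+ 2 - `|y| ^+ 2 * z ^+ 2); first by ring.
  by rewrite !real_normK ?num_real //; ring.
have Epq : p * y / q - q * z / p = (p * p * y - q * q * z) / (p * q) by field; exact/andP.
have Epq' : p * y / q + q * z / p = (p * p * y + q * q * z) / (p * q) by field; exact/andP.
exists l1', l2', x, w, (q * z / p); split; first exact: E1.
change (conj (P *m T0) A2 = mx2 x (q * z / p) (q * z / p) w \/
        conj (P *m T0) A2 = mx2 x (- (q * z / p)) (q * z / p) w).
rewrite E2; move/eqP: sq; rewrite mulf_eq0 => /orP[/eqP h|/eqP h].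
  left; congr mx2; apply/eqP; rewrite -subr_eq0 Epq pp qq h mul0r //.
right; congr mx2; apply/eqP; rewrite -subr_eq0 opprK Epq' pp qq h mul0r //.
Qed.
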